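(* Let $n\ge3$ be an odd integer and let $x\in\mathcal{D}_n$ have order $m$. Then the degree of $x$ in $OD(\mathcal{D}_n)$ is $$\deg(x)=\begin{cases} m-2\phi(m)+\sum_{\lambda\mid\frac{n}{m}}\phi(\lambda m), & m>2,\\ 2n-1, & m=1,\\ 1, & m=2,\end{cases}$$ where $\phi$ is Euler's totient function.
   Context: The dihedral group $\mathcal{D}_n$ ($n\ge3$) is the group $\langle a,b\mid a^n=b^2=(ab)^2=e\rangle$ of order $2n$. For a finite group $G$, $o(x)$ denotes the order of $x\in G$. The order-divisor graph $OD(G)$ is the simple undirected graph with vertex set $G$, in which two distinct vertices $x,y$ are adjacent if and only if $o(x)\neq o(y)$ and either $o(x)\mid o(y)$ or $o(y)\mid o(x)$. *)

(* Defs.v *)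
From mathcomp Require Import all_boot all_order all_algebra all_fingroup all_solvable.
Set Implicit Arguments. Unset Strict Implicit. Unset Printing Implicit Defensive.

Definition od_adj (gT : finGroupType) (x y : gT) : bool :=
  [&& x != y, #[x]%g != #[y]%g & (#[x]%g %| #[y]%g) || (#[y]%g %| #[x]%g)].

Definition od_deg (gT : finGroupType) (G : {set gT}) (x : gT) : nat :=
  #|[set y in G | od_adj x y]|.

(* Main.v *)
Require Import Defs.
From mathcomp Require Import all_boot all_order all_algebra all_fingroup all_solvable.
From mathcomp Require Import zify.
Import GRing.Theory.
Set Implicit Arguments. Unset Strict Implicit. Unset Printing Implicit Defensive.
Local Open Scope group_scope.

Lemma elt_of_order (gT : finGroupType) (a : gT) d : (d %| #[a])%N ->
  #[a ^+ (#[a] %/ d)] = d.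
Proof.
move=> dd; have a0 := order_gt0 a.
case/dvdnP: dd => k kE.
have d0 : (0 < d)%N by move: a0; rewrite kE; case: d {kE} => //; rewrite muln0.
have k0 : (0 < k)%N by move: a0; rewrite kE; case: k {kE}.
rewrite orderXdiv kE mulnK // ?mulKn //.
by apply: dvdn_mulr.
Qed.

Lemma card_ord_cyc (gT : finGroupType) (a : gT) d : (d %| #[a])%N ->
  #|[set y in <[a]> | #[y] == d]| = totient d.
Proof.
move=> dd; have ob := elt_of_order dd; set b := a ^+ _ in ob.
rewrite -{2}ob totient_gen; apply: eq_card => y; rewrite !inE /generator -ob.
have sba : <[b]> \subset <[a]> by rewrite cycle_subG mem_cycle.
case yA: (y \in <[a]>) => /=.
  rewrite (eq_subG_cyclic (cycle_cyclic a)) // ?cycle_subG // -!orderE.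
apply/esym/negbTE; apply: contraFN yA => /eqP E.
by rewrite -cycle_subG -E.
Qed.

Lemma card_sumb (T : finType) (A : {set T}) (Q : pred T) :
  #|[set y in A | Q y]| = (\sum_(y in A) (Q y : nat))%N.
Proof.
rewrite -sum1_card big_mkcond [RHS]big_mkcond; apply: eq_bigr => y _.
by rewrite !inE; case: (y \in A); case: (Q y).
Qed.

Lemma count_cyc (gT : finGroupType) (a : gT) (P : pred nat) :
  #|[set y in <[a]> | P #[y]]| = (\sum_(d <- divisors #[a] | P d) totient d)%N.
Proof.
transitivity (\sum_(d <- divisors #[a] | P d) #|[set y in <[a]> | #[y] == d]|)%N; last first.
  rewrite big_seq_cond [RHS]big_seq_cond; apply: eq_bigr => d /andP[].
  rewrite -dvdn_divisors ?order_gt0 // => dd _.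
  exact: card_ord_cyc.
rewrite card_sumb.
under [RHS]eq_bigr do rewrite card_sumb.
rewrite exchange_big /=.
apply: eq_bigr => y yA.
have yd : #[y] \in divisors #[a].
  by rewrite -dvdn_divisors ?order_gt0 // orderE order_dvdG.
rewrite big_mkcond /= (bigD1_seq #[y]) ?divisors_uniq //= eqxx.
rewrite big1 ?addn0; first by case: (P #[y]).
by move=> i; rewrite eq_sym => /negbTE ->; case: (P i).
Qed.
Lemma Dstruct n : 1 < n -> exists x0 : 'D_(n.*2), #[x0] = n /\
   forall y : 'D_(n.*2), y \notin <[x0]> -> #[y] = 2.
Proof.
move=> n1.
have := Grp_dihedral n1 ('D_(n.*2))%G.
rewrite homg_refl => /esym /existsP[[x0 y0]] /= /and4P[/eqP defG /eqP xn /eqP y2 /eqP xy].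
move: defG xn y2 xy => /= defG xn y2 xy.
have nXY : <[y0]> \subset 'N(<[x0]>).
  by rewrite cycle_subG inE -cycleJ xy cycleV.
rewrite norm_joinEr // in defG.
have cG := mul_cardG <[x0]>%G <[y0]>%G.
rewrite /= defG card_dihedral // -!orderE in cG.
have ox : #[x0] %| n by rewrite order_dvdn xn.
have oy : #[y0] %| 2 by rewrite order_dvdn y2.
have ox' : #[x0] <= n by apply: dvdn_leq; lia.
have oy' : #[y0] <= 2 by apply: dvdn_leq.
have ci : 0 < #|<[x0]> :&: <[y0]>| by rewrite cardG_gt0.
have le1 : (#[x0] * #[y0] <= n * 2)%N by apply: leq_mul.
have oxn : #[x0] = n.
  have {}cG : (#[x0] * #[y0] = 2 * n * #|<[x0]> :&: <[y0]>|)%N by rewrite cG mul2n.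
  have c1 : #|<[x0]> :&: <[y0]>| = 1%N.
    have : (2 * n * #|<[x0]> :&: <[y0]>| <= 2 * n * 1)%N by rewrite -cG muln1 (mulnC 2).
    rewrite leq_pmul2l; last lia.
    by move: ci => h1 h2; apply/eqP; rewrite eqn_leq h1 h2.
  rewrite c1 muln1 in cG.
  have : (n * 2 <= #[x0] * 2)%N by rewrite mulnC -cG leq_mul2l oy' orbT.
  by rewrite leq_mul2r /= => h; apply/eqP; rewrite eqn_leq h ox'.
exists x0; split; first exact: oxn.
move=> y yX.
have : y \in <[x0]> * <[y0]> by rewrite defG inE.
case/mulsgP => a b aX bY yE; subst y.
case/cycleP: bY => k bE; subst b.
rewrite -(expg_mod _ y2) in yX *.
have : k %% 2 < 2 by rewrite ltn_mod.
case: (k %% 2) yX => [|[|//]] yX _.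
  by rewrite expg0 mulg1 aX in yX.
rewrite expg1 in yX *.
apply/eqP; rewrite eqn_leq; apply/andP; split.
  apply: dvdn_leq => //; rewrite order_dvdn expgS expg1.
  case/cycleP: aX => i ->.
  have y0V : y0^-1 = y0 by apply/eqP; rewrite eq_invg_mul -expg2 y2.
  have hc : (x0 ^+ i) ^ y0 = (x0 ^+ i)^-1 by rewrite conjXg xy expgVn.
  rewrite conjgE y0V in hc.
  by rewrite -!mulgA hc mulgV.
rewrite order_gt1; apply: contraNneq yX => ->; exact: group1.
Qed.
Local Close Scope group_scope.

Lemma sum_split (s : seq nat) m (F : nat -> nat) : uniq s -> m \in s ->
  (\sum_(d <- s | d %| m) F d + \sum_(d <- s | m %| d) F d =
   \sum_(d <- s | (d != m) && ((d %| m) || (m %| d))) F d + 2 * F m)%N.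
Proof.
move=> us ms.
have E : (\sum_(d <- s) ((d == m) * F d) = F m)%N.
  rewrite (bigD1_seq m) //= eqxx mul1n big1 ?addn0 // => i /negbTE ->.
  by rewrite mul0n.
rewrite -E big_distrr /= big_mkcond [X in (_ + X)%N]big_mkcond -big_split /=.
rewrite [X in _ = (X + _)%N]big_mkcond -big_split /=.
apply: eq_bigr => d _.
case: (eqVneq d m) => [->|ne]; first by rewrite dvdnn /= mul1n add0n addnn mul2n.
rewrite muln0 addn0.
case h1: (d %| m); case h2: (m %| d) => //=.
  by move: ne; rewrite eqn_dvd h1 h2.
by rewrite addn0.
Qed.

Lemma sum_mul_div n m : (0 < n)%N -> (m %| n)%N -> (0 < m)%N ->
  (\sum_(d <- divisors n | m %| d) totient d =
   \sum_(l <- divisors (n %/ m)) totient (l * m))%N.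
Proof.
move=> n0 mn m0.
rewrite -big_filter -(big_map (fun l => l * m) xpredT).
apply: perm_big; apply: uniq_perm.
- by apply: filter_uniq; apply: divisors_uniq.
- rewrite map_inj_uniq ?divisors_uniq // => a b /eqP.
  by rewrite eqn_pmul2r // => /eqP.
move=> d; rewrite mem_filter -dvdn_divisors //.
have nm0 : (0 < n %/ m)%N by rewrite divn_gt0 // dvdn_leq.
apply/andP/mapP => [[md dn]|[l]].
  exists (d %/ m); first by rewrite -dvdn_divisors // dvdn_divLR // divnK.
  by rewrite divnK.
rewrite -dvdn_divisors // => ln ->; split; first exact: dvdn_mull.
by rewrite -(divnK mn) dvdn_pmul2r.
Qed.

Lemma sum_div_div n m (F : nat -> nat) : (0 < n)%N -> (m %| n)%N -> (0 < m)%N ->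
  (\sum_(d <- divisors n | d %| m) F d = \sum_(d <- divisors m) F d)%N.
Proof.
move=> n0 mn m0.
rewrite -big_filter; apply: perm_big; apply: uniq_perm.
- by apply: filter_uniq; apply: divisors_uniq.
- exact: divisors_uniq.
move=> d; rewrite mem_filter -!dvdn_divisors //.
apply/andP/idP => [[]//|dm]; split => //; exact: dvdn_trans mn.
Qed.

Lemma sum_totient_div m : (0 < m)%N -> (\sum_(d <- divisors m) totient d)%N = m.
Proof.
case: m => // k _.
have := count_cyc (Zp1 : 'I_k.+1) predT.
rewrite order_Zp1 /= => <-.
rewrite -[RHS](order_Zp1 k) orderE; apply: eq_card => y; rewrite !inE andbT.
by [].
Qed.

Local Open Scope ring_scope.

Theorem mainTheorem17 (n : nat) (x : 'D_(n.*2)) (m : nat) :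
  (3 <= n)%N -> odd n -> #[x]%g = m ->
  [/\ (2 < m)%N ->
        (od_deg ('D_(n.*2))%g x)%:Z =
          m%:Z - 2 * (totient m)%:Z
          + (\sum_(l <- divisors (n %/ m)) totient (l * m))%N%:Z,
      m = 1%N -> od_deg ('D_(n.*2))%g x = (2 * n - 1)%N
    & m = 2%N -> od_deg ('D_(n.*2))%g x = 1%N].
Proof.
move=> n3 on ox.
have n1 : (1 < n)%N by apply: leq_trans n3.
have [x0 [ox0 out2]] := Dstruct n1.
have inX y : y \in <[x0]>%g -> (#[y]%g %| n)%N.
  by move=> yX; have := order_dvdG yX; rewrite -orderE ox0.
have oddX y : y \in <[x0]>%g -> odd #[y]%g by move=> /inX /dvdn_odd; apply.
rewrite /od_deg.
split.
- move=> m2.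
  have xX : x \in <[x0]>%g.
    apply/negPn/negP => /out2; rewrite ox => m2'; move: m2; rewrite m2'.
    by [].
  have mn : (m %| n)%N by rewrite -ox; exact: inX.
  have om : odd m by rewrite -ox; exact: oddX.
  have m0 : (0 < m)%N by apply: leq_trans m2.
  have n0 : (0 < n)%N by apply: leq_trans n1.
  have -> : [set y in [set: 'D_(n.*2)] | od_adj x y] =
      [set y in <[x0]>%g | (#[y]%g != m) && ((#[y]%g %| m)%N || (m %| #[y]%g)%N)].
    apply/setP => y; rewrite !inE /od_adj ox.
    case: (eqVneq x y) => [<-|ne]; first by rewrite ox eqxx /= andbF.
    case yX: (y \in <[x0]>%g) => /=; first by rewrite eq_sym orbC.
    rewrite out2 ?yX // dvdn2 om /= orbF.
    apply/negbTE; rewrite negb_and negbK; apply/orP; right.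
    by apply/negP => /dvdn_leq h; move: m2; rewrite ltnNge h.
  rewrite (count_cyc x0 (fun d => (d != m) && ((d %| m)%N || (m %| d)%N))) ox0.
  have ms : m \in divisors n by rewrite -dvdn_divisors.
  have h := sum_split totient (divisors_uniq n) ms.
  rewrite sum_div_div // sum_totient_div // sum_mul_div // in h.
  set B := (\sum_(l <- divisors (n %/ m)) _)%N in h *.
  set S := (\sum_(d <- _ | _) _)%N in h *.
  have hz := congr1 Posz h.
  rewrite !PoszD in hz.
  lia.
- move=> m1; rewrite m1 in ox.
  have x1 : x = 1%g by apply/eqP; rewrite -order_eq1 ox.
  subst x.
  have -> : [set y in [set: 'D_(n.*2)] | od_adj 1%g y] = [set~ 1%g].
    apply/setP => y; rewrite !inE /od_adj order1 dvd1n /= andbT.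
    by rewrite eq_sym [1%N == _]eq_sym order_eq1 andbb.
  rewrite cardsC1 -cardsT card_dihedral //.
  lia.
- move=> m2; rewrite m2 in ox.
  have -> : [set y in [set: 'D_(n.*2)] | od_adj x y] = [set 1%g].
    apply/setP => y; rewrite !inE /od_adj ox.
    case yX: (y \in <[x0]>%g); last first.
      rewrite out2 ?yX // eqxx andbF /=.
      by apply/esym/negbTE; apply: contraFN yX => /eqP ->; rewrite group1.
    have oy := oddX _ yX.
    have -> : (x != y) by apply: contraTneq oy => <-; rewrite ox.
    rewrite -order_eq1 dvdn2 oy /=.
    have oy0 := order_gt0 y.
    case: (eqVneq #[y]%g 1%N) => [->|ne] //=.
    have h : (#[y]%g != 2)%N by apply: contraTneq oy => ->.
    rewrite eq_sym h /=; apply/negbTE; apply: contra ne => /dvdn_leq h2.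
    have h3 : (#[y]%g <= 2)%N by exact: h2.
    move: h h3 oy0 oy; case: #[y]%g => [|[|[|]]] //.
  by rewrite cards1.
Qed.
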